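(* For any $n\ge 1$, the poset $(\mathsf{Tr}(n),\preccurlyeq)$ is a lattice, and for $u,v\in\mathsf{Tr}(n)$ the join of $u$ and $v$ is the word $\max(u_1,v_1)\max(u_2,v_2)\cdots\max(u_n,v_n)$.
   Context: A triword of size $n$ is a word $u=u_1\cdots u_n$ with $u_i\in\{0,1,2\}$, $u_1\ne 2$, and such that $u_i=0$ implies $u_j\neq 1$ for all $j>i$; $\mathsf{Tr}(n)$ is their set, ordered componentwise: $u\preccurlyeq v$ iff $u_i\le v_i$ for all $i\in[n]$. *)

(* Defs.v *)
From mathcomp Require Import all_boot.
Set Implicit Arguments. Unset Strict Implicit. Unset Printing Implicit Defensive.

(* A word of size n over {0,1,2}: letter u_{i+1} is [u i] for i : 'I_n
   (0-based indexing). *)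
Definition word (n : nat) := {ffun 'I_n -> 'I_3}.

Definition triword n (u : word n) : bool :=
  [forall i : 'I_n, (nat_of_ord i == 0) ==> (nat_of_ord (u i) != 2)] &&
  [forall i : 'I_n, forall j : 'I_n,
     ((i < j) && (nat_of_ord (u i) == 0)) ==> (nat_of_ord (u j) != 1)].

Definition wle n (u v : word n) : bool :=
  [forall i : 'I_n, nat_of_ord (u i) <= nat_of_ord (v i)].

Definition wmax n (u v : word n) : word n :=
  [ffun i => if nat_of_ord (u i) <= nat_of_ord (v i) then v i else u i].

Definition is_join_in_Tr n (u v w : word n) : Prop :=
  triword w /\ wle u w /\ wle v w /\
  (forall z : word n, triword z -> wle u z -> wle v z -> wle w z).

Definition is_meet_in_Tr n (u v w : word n) : Prop :=
  triword w /\ wle w u /\ wle w v /\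
  (forall z : word n, triword z -> wle z u -> wle z v -> wle z w).

(* Main.v *)
Require Import Defs.
From mathcomp Require Import all_boot.
From mathcomp Require Import zify.

Lemma wle_maxl n (u v : word n) : wle u (wmax u v).
Proof. apply/forallP=> i; rewrite ffunE; case: ifP => //; lia. Qed.

Lemma wle_maxr n (u v : word n) : wle v (wmax u v).
Proof. apply/forallP=> i; rewrite ffunE; case: ifP => //; lia. Qed.

Lemma wmax_lub n (u v z : word n) : wle u z -> wle v z -> wle (wmax u v) z.
Proof.
move=> /forallP hu /forallP hv; apply/forallP=> i; rewrite ffunE.
by case: ifP => _; [apply: hv | apply: hu].
Qed.

Lemma wle_trans n (u v z : word n) : wle u v -> wle v z -> wle u z.
Proof.
move=> /forallP hu /forallP hv; apply/forallP=> i.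
exact: leq_trans (hu i) (hv i).
Qed.

Lemma aux (a b c d : nat) : a < 3 -> b < 3 -> c < 3 -> d < 3 ->
  (a == 0) ==> (c != 1) -> (b == 0) ==> (d != 1) ->
  (if a <= b then b else a) == 0 -> (if c <= d then d else c) != 1.
Proof.
case: a => [|[|[|a]]] //; case: b => [|[|[|b]]] //;
case: c => [|[|[|c]]] //; case: d => [|[|[|d]]] //.
Qed.

Lemma triword_max n (u v : word n) : triword u -> triword v -> triword (wmax u v).
Proof.
move=> /andP[/forallP a1 /forallP a2] /andP[/forallP b1 /forallP b2].
apply/andP; split.
  apply/forallP=> i; rewrite ffunE; case: ifP => _.
    exact: b1.
  exact: a1.
apply/forallP=> i; apply/forallP=> j; apply/implyP=> /andP[lt].
move: (forallP (a2 i) j) (forallP (b2 i) j); rewrite lt /= !ffunE !(fun_if (@nat_of_ord 3)).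
apply: aux; exact: ltn_ord.
Qed.

Definition wzero n : word n := [ffun _ => ord0].

Lemma triword_zero n : triword (wzero n).
Proof.
apply/andP; split.
  by apply/forallP=> i; apply/implyP=> _; rewrite ffunE.
by apply/forallP=> i; apply/forallP=> j; apply/implyP=> _; rewrite ffunE.
Qed.

Lemma wle_zero n (u : word n) : wle (wzero n) u.
Proof. by apply/forallP=> i; rewrite ffunE. Qed.

Section Meet.
Variables (n : nat) (u v : word n).
Definition P (z : word n) := triword z && wle z u && wle z v.
Definition mfold (s : seq (word n)) :=
  foldr (fun z acc => if P z then wmax z acc else acc) (wzero n) s.

Lemma mfold_spec s :
  [/\ triword (mfold s), wle (mfold s) u, wle (mfold s) v &
      forall z, z \in s -> P z -> wle z (mfold s)].
Proof.
elim: s => [|a s [h1 h2 h3 h4]] /=.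
  by split; rewrite /mfold /= ?triword_zero ?wle_zero.
rewrite /mfold /=; fold (mfold s).
case Pa: (P a); move: (Pa) => /andP[/andP[t1 t2] t3] || idtac.
  split.
  - exact: triword_max.
  - exact: wmax_lub.
  - exact: wmax_lub.
  - move=> z; rewrite inE => /orP[/eqP-> _|zs Pz]; first exact: wle_maxl.
    exact: (@wle_trans n _ _ _ (h4 z zs Pz) (@wle_maxr n a (mfold s))).
split => // z; rewrite inE => /orP[/eqP-> |zs Pz]; first by rewrite Pa.
exact: h4.
Qed.
End Meet.

Theorem mainTheorem5 (n : nat) (hn : 1 <= n) :
  (forall u v : word n, triword u -> triword v ->
     (exists w : word n, is_join_in_Tr u v w) /\
     (exists w : word n, is_meet_in_Tr u v w)) /\
  (forall u v : word n, triword u -> triword v -> is_join_in_Tr u v (wmax u v)).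
Proof.
have J : forall u v : word n, triword u -> triword v -> is_join_in_Tr u v (wmax u v).
  move=> u v tu tv; split; first exact: triword_max.
  split; first exact: wle_maxl.
  split; first exact: wle_maxr.
  move=> z _; exact: wmax_lub.
split=> // u v tu tv; split; first by exists (wmax u v); apply: J.
have [h1 h2 h3 h4] := mfold_spec n u v (enum {ffun 'I_n -> 'I_3}).
exists (@mfold n u v (enum {ffun 'I_n -> 'I_3})); split=> //; split=> //; split=> //.
move=> z tz zu zv; apply: h4; first by rewrite mem_enum.
by rewrite /P tz zu zv.
Qed.
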